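(* Let $\mathfrak l$ be a real finite-dimensional nilpotent Lie algebra with $\dim\mathfrak l'=2$ and $\mathfrak l'\subset\mathfrak z(\mathfrak l)$, let $\bar{\mathfrak l}\subset\mathfrak l$ be a 3-dimensional subspace with $[\bar{\mathfrak l},\bar{\mathfrak l}]=\mathfrak l'$, let $\mathfrak a$ be a semisimple orthogonal $\mathfrak l$-module and let $[\alpha,\gamma]\in\mathcal H^2_Q(\mathfrak l,\mathfrak a)$ be admissible, represented with $\alpha(\mathfrak l,\mathfrak l)\subset\mathfrak a^{\mathfrak l}$. Then $\alpha([L,\mathfrak l],\mathfrak l)=0$ for all $L\in\mathfrak l$ satisfying $[L,\bar{\mathfrak l}]=0$.
   Context: For a Lie algebra $\mathfrak l$: $\mathfrak l^1=\mathfrak l$, $\mathfrak l^{k+1}=[\mathfrak l,\mathfrak l^k]$, $\mathfrak l'=\mathfrak l^2$, $\mathfrak z(\mathfrak l)$ the centre. An orthogonal $\mathfrak l$-module $(\rho,\mathfrak a)$ is a finite-dimensional real vector space with a nondegenerate symmetric bilinear form $\langle\cdot,\cdot\rangle_{\mathfrak a}$ and a representation by skew-adjoint maps; $\mathfrak a^{\mathfrak l}$ its invariants. $C^p(\mathfrak l,\mathfrak a)$: alternating $p$-linear maps with Chevalley–Eilenberg differential $d$; $C^p(\mathfrak l)=C^p(\mathfrak l,\mathbb R)$; $\langle\alpha\wedge\beta\rangle$ is the wedge product followed by contraction with $\langle\cdot,\cdot\rangle_{\mathfrak a}$. $\mathcal Z^2_Q(\mathfrak l,\mathfrak a)=\{(\alpha,\gamma)\in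 C^2(\mathfrak l,\mathfrak a)\oplus C^3(\mathfrak l): d\alpha=0,d\gamma=\frac12\langle\alpha\wedge\alpha\rangle\}$; the group $C^1(\mathfrak l,\mathfrak a)\oplus C^2(\mathfrak l)$ with $(\tau_1,\sigma_1)*(\tau_2,\sigma_2)=(\tau_1+\tau_2,\sigma_1+\sigma_2+\frac12\langle\tau_1\wedge\tau_2\rangle)$ acts by $(\alpha,\gamma)(\tau,\sigma)=(\alpha+d\tau,\gamma+d\sigma+\langle(\alpha+\frac12d\tau)\wedge\tau\rangle)$; $\mathcal H^2_Q(\mathfrak l,\mathfrak a)$ is the orbit set. Admissibility: with $\mathfrak l^{m+2}=0$, $\mathfrak l_{(0)}=\mathfrak z(\mathfrak l)\cap\ker\rho$, $\mathfrak l_{(k)}=\mathfrak z(\mathfrak l)\cap\mathfrak l^{k+1}$ ($k\ge1$), and a representative with $\alpha(\mathfrak l,\mathfrak l)\subset\mathfrak a^{\mathfrak l}$, the class is admissible iff for all $0\le k\le m$: $(A_k)$ whenever $L_0\in\mathfrak l_{(k)}$ and there are $A_0\in\mathfrak a$, $Z_0\in(\mathfrak l^{k+1})^*$ with $\alpha(L,L_0)=0$ and $\gamma(L,L_0,\cdot)=-\langle A_0,\alpha(L,\cdot)\rangle_{\mathfrak a}+\langle Z_0,[L,\cdot]\rangle$ on $\mathfrak l^{k+1}$ for all $L$, then $L_0=0$; $(B_k)$ $\alpha$ applied to the kernel of the bracket map $\mathfrak l\otimes\mathfrak l^{k+1}\to\mathfrak l$ is a nondegenerate subspace of $\mathfrak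 a$. *)

(* Defs.v *)
From HB Require Import structures.
From mathcomp Require Import all_boot all_order all_algebra.
From mathcomp Require Import reals.
Set Implicit Arguments. Unset Strict Implicit. Unset Printing Implicit Defensive.
Import Order.TTheory GRing.Theory Num.Theory.
Local Open Scope ring_scope.

Section LieDefs.
Variables (R : realType) (V A : vectType R).

Definition lie_bracket (br : V -> V -> V) : Prop :=
  (forall (a : R) x y z, br (a *: x + y) z = a *: br x z + br y z) /\
  (forall (a : R) x y z, br z (a *: x + y) = a *: br z x + br z y) /\
  (forall x, br x x = 0) /\
  (forall x y z, br x (br y z) + br y (br z x) + br z (br x y) = 0).

Definition bspace (br : V -> V -> V) (U W : {vspace V}) : {vspace V} :=
  <<[seq br u w | u <- vbasis U, w <- vbasis W]>>%VS.

(* lower central series: lcs br n = l^n for n >= 1 (l^1 = l, l^{n+1} = [l, l^n]);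
   lcs br 0 := l as well (unused); lcs br n = lcs_aux br (n-1). *)
Fixpoint lcs_aux (br : V -> V -> V) (n : nat) : {vspace V} :=
  match n with
  | 0 => fullv
  | k.+1 => bspace br fullv (lcs_aux br k)
  end.
Definition lcs (br : V -> V -> V) (n : nat) : {vspace V} := lcs_aux br n.-1.

Definition central (br : V -> V -> V) (x : V) : Prop := forall y, br x y = 0.

Definition orth_module (br : V -> V -> V) (rho : V -> A -> A) (b : A -> A -> R)
  : Prop :=
  (forall (c : R) x y u, rho (c *: x + y) u = c *: rho x u + rho y u) /\
  (forall (c : R) x u v, rho x (c *: u + v) = c *: rho x u + rho x v) /\
  (forall x y u, rho (br x y) u = rho x (rho y u) - rho y (rho x u)) /\
  (forall (c : R) u v w, b (c *: u + v) w = c * b u w + b v w) /\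
  (forall u v, b u v = b v u) /\
  (forall u, (forall v, b u v = 0) -> u = 0) /\
  (forall x u v, b (rho x u) v = - b u (rho x v)).

Definition invariant_subspace (rho : V -> A -> A) (U : {vspace A}) : Prop :=
  forall x u, u \in U -> rho x u \in U.

Definition semisimple_module (rho : V -> A -> A) : Prop :=
  forall U : {vspace A}, invariant_subspace rho U ->
    exists W : {vspace A}, invariant_subspace rho W /\
      (U + W)%VS = fullv /\ (U :&: W)%VS = 0%VS.

Definition cochain2 (alpha : V -> V -> A) : Prop :=
  (forall (c : R) x y z, alpha (c *: x + y) z = c *: alpha x z + alpha y z) /\
  (forall (c : R) x y z, alpha z (c *: x + y) = c *: alpha z x + alpha z y) /\
  (forall x, alpha x x = 0).

Definition cochain3 (gamma : V -> V -> V -> R) : Prop :=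
  (forall (c : R) x y z w, gamma (c *: x + y) z w = c * gamma x z w + gamma y z w) /\
  (forall (c : R) x y z w, gamma z (c *: x + y) w = c * gamma z x w + gamma z y w) /\
  (forall (c : R) x y z w, gamma z w (c *: x + y) = c * gamma z w x + gamma z w y) /\
  (forall x y, gamma x x y = 0) /\
  (forall x y, gamma y x x = 0) /\
  (forall x y, gamma x y x = 0).

Definition d2 (br : V -> V -> V) (rho : V -> A -> A) (alpha : V -> V -> A)
  (x1 x2 x3 : V) : A :=
  rho x1 (alpha x2 x3) - rho x2 (alpha x1 x3) + rho x3 (alpha x1 x2)
  - alpha (br x1 x2) x3 + alpha (br x1 x3) x2 - alpha (br x2 x3) x1.

(* Chevalley-Eilenberg differential of a real (trivial module) 3-cochain *)
Definition d3 (br : V -> V -> V) (gamma : V -> V -> V -> R) (x1 x2 x3 x4 : V) : R :=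
  - gamma (br x1 x2) x3 x4 + gamma (br x1 x3) x2 x4 - gamma (br x1 x4) x2 x3
  - gamma (br x2 x3) x1 x4 + gamma (br x2 x4) x1 x3 - gamma (br x3 x4) x1 x2.

(* 1/2 <alpha /\ alpha> (shuffle convention for the wedge product) *)
Definition half_wedge (b : A -> A -> R) (alpha : V -> V -> A) (x1 x2 x3 x4 : V) : R :=
  b (alpha x1 x2) (alpha x3 x4) - b (alpha x1 x3) (alpha x2 x4)
  + b (alpha x1 x4) (alpha x2 x3).

Definition quad_cocycle (br : V -> V -> V) (rho : V -> A -> A) (b : A -> A -> R)
  (alpha : V -> V -> A) (gamma : V -> V -> V -> R) : Prop :=
  cochain2 alpha /\ cochain3 gamma /\
  (forall x1 x2 x3, d2 br rho alpha x1 x2 x3 = 0) /\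
  (forall x1 x2 x3 x4, d3 br gamma x1 x2 x3 x4 = half_wedge b alpha x1 x2 x3 x4).

Definition lk (br : V -> V -> V) (rho : V -> A -> A) (k : nat) (L0 : V) : Prop :=
  central br L0 /\
  (if k is 0 then (forall u, rho L0 u = 0) else L0 \in lcs br k.+1).

(* Z0 : V -> R restricted to U is a linear functional on U, i.e. an element of U^* *)
Definition functional_on (U : {vspace V}) (Z0 : V -> R) : Prop :=
  forall (c : R) u v, u \in U -> v \in U -> Z0 (c *: u + v) = c * Z0 u + Z0 v.

Definition condA (br : V -> V -> V) (rho : V -> A -> A) (b : A -> A -> R)
  (alpha : V -> V -> A) (gamma : V -> V -> V -> R) (k : nat) : Prop :=
  forall L0, lk br rho k L0 ->
    (exists (A0 : A) (Z0 : V -> R), functional_on (lcs br k.+1) Z0 /\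
       (forall L, alpha L L0 = 0) /\
       (forall L X, X \in lcs br k.+1 ->
          gamma L L0 X = - b A0 (alpha L X) + Z0 (br L X))) ->
    L0 = 0.

(* alpha applied to the kernel of the bracket map l (x) l^{k+1} -> l;
   an element of l (x) l^{k+1} is written as a finite sum sum_i x_i (x) y_i,
   y_i in l^{k+1}, encoded by the list of pairs (x_i, y_i). *)
Definition alpha_ker (br : V -> V -> V) (alpha : V -> V -> A) (k : nat) (a : A)
  : Prop :=
  exists s : seq (V * V),
    (forall p, p \in s -> p.2 \in lcs br k.+1) /\
    \sum_(p <- s) br p.1 p.2 = 0 /\
    a = \sum_(p <- s) alpha p.1 p.2.

Definition condB (br : V -> V -> V) (b : A -> A -> R) (alpha : V -> V -> A)
  (k : nat) : Prop :=
  forall a, alpha_ker br alpha k a ->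
    (forall c, alpha_ker br alpha k c -> b a c = 0) -> a = 0.

End LieDefs.

(* Main.v *)
Require Import Defs.
From HB Require Import structures.
From mathcomp Require Import all_boot all_order all_algebra.
From mathcomp Require Import reals.
Import Order.TTheory GRing.Theory Num.Theory.
Set Implicit Arguments. Unset Strict Implicit.
Local Open Scope ring_scope.

Section H.
Variables (R : realType) (V : vectType R).

Lemma xx0 (M : zmodType) (x : M) : x = x + x -> x = 0.
Proof. by move/(congr1 (fun t => t - x)); rewrite subrr addrK => ->. Qed.

Lemma lin0 (M : lmodType R) (f : V -> M) :
  (forall (c : R) x y, f (c *: x + y) = c *: f x + f y) -> f 0 = 0.
Proof. by move=> H; apply: xx0; rewrite -{1}(addr0 (0:V)) -[X in X + _](scale1r (0:V)) H scale1r. Qed.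
Lemma linZ (M : lmodType R) (f : V -> M) :
  (forall (c : R) x y, f (c *: x + y) = c *: f x + f y) -> forall c x, f (c *: x) = c *: f x.
Proof. by move=> H c x; rewrite -(addr0 (c *: x)) H (lin0 H) addr0. Qed.
Lemma linD (M : lmodType R) (f : V -> M) :
  (forall (c : R) x y, f (c *: x + y) = c *: f x + f y) -> forall x y, f (x + y) = f x + f y.
Proof. by move=> H x y; have := H 1 x y; rewrite !scale1r. Qed.
Lemma linN (M : lmodType R) (f : V -> M) :
  (forall (c : R) x y, f (c *: x + y) = c *: f x + f y) -> forall x, f (- x) = - f x.
Proof. by move=> H x; rewrite -(scaleN1r x) (linZ H) scaleN1r. Qed.

Lemma slin0 (M : lmodType R) (f : M -> R) :
  (forall (c : R) x y, f (c *: x + y) = c * f x + f y) -> f 0 = 0.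
Proof. by move=> H; apply: xx0; rewrite -{1}(addr0 (0:M)) -[X in X + _](scale1r (0:M)) H mul1r. Qed.
Lemma slinZ (M : lmodType R) (f : M -> R) :
  (forall (c : R) x y, f (c *: x + y) = c * f x + f y) -> forall c x, f (c *: x) = c * f x.
Proof. by move=> H c x; rewrite -(addr0 (c *: x)) H (slin0 H) addr0. Qed.
Lemma slinD (M : lmodType R) (f : M -> R) :
  (forall (c : R) x y, f (c *: x + y) = c * f x + f y) -> forall x y, f (x + y) = f x + f y.
Proof. by move=> H x y; have := H 1 x y; rewrite scale1r mul1r. Qed.
Lemma slinN (M : lmodType R) (f : M -> R) :
  (forall (c : R) x y, f (c *: x + y) = c * f x + f y) -> forall x, f (- x) = - f x.
Proof. by move=> H x; rewrite -(scaleN1r x) (slinZ H) mulN1r. Qed.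

Lemma span_ind (P : V -> Prop) (X : seq V) : P 0 ->
  (forall (c : R) x y, P x -> P y -> P (c *: x + y)) ->
  (forall i, (i < size X)%N -> P X`_i) -> forall v, v \in <<X>>%VS -> P v.
Proof.
move=> P0 Pl PX v Hv; rewrite (coord_span (X := in_tuple X) Hv).
apply: (big_ind P) => //.
- by move=> x y Px Py; have := Pl 1 x y Px Py; rewrite scale1r.
- move=> i _; have := Pl (coord (in_tuple X) i v) _ 0 (PX i (ltn_ord i)) P0.
  by rewrite addr0.
Qed.

Lemma mem_vb (U : {vspace V}) x : x \in U -> x \in <<vbasis U>>%VS.
Proof. by rewrite (span_basis (vbasisP U)). Qed.

Lemma mem_bspace (br : V -> V -> V) (U W : {vspace V}) x y :
  lie_bracket br -> x \in U -> y \in W -> br x y \in bspace br U W.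
Proof.
case=> [brl [brr _]] /mem_vb Hx /mem_vb Hy.
pose P := fun x => forall y, y \in <<vbasis W>>%VS -> br x y \in bspace br U W.
suff: P x by apply.
apply: (span_ind (P := P)) Hx.
- by move=> z _; rewrite (lin0 (f := fun t => br t z)) ?rpred0 //.
- move=> c a b Pa Pb z Hz; rewrite brl; apply: rpredD; first apply: rpredZ; auto.
- move=> i Hi z; apply: (span_ind (P := fun z => br _ z \in _)).
  + by rewrite (lin0 (f := br _)) ?rpred0.
  + by move=> c a b Pa Pb; rewrite brr; apply: rpredD; first apply: rpredZ.
  + move=> j Hj; apply: memv_span; apply: allpairs_f; exact: mem_nth.
Qed.

End H.
Unset Implicit Arguments. Set Strict Implicit.
Theorem lemma5 (R : realType) (V A : vectType R) (br : V -> V -> V)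
  (rho : V -> A -> A) (b : A -> A -> R)
  (alpha : V -> V -> A) (gamma : V -> V -> V -> R)
  (m : nat) (lbar : {vspace V}) :
  lie_bracket br ->
  lcs br m.+2 = 0%VS ->
  \dim (lcs br 2) = 2%N ->
  (forall x, x \in lcs br 2 -> central br x) ->
  \dim lbar = 3%N ->
  bspace br lbar lbar = lcs br 2 ->
  orth_module br rho b ->
  semisimple_module rho ->
  quad_cocycle br rho b alpha gamma ->
  (forall x y z, rho z (alpha x y) = 0) ->
  (forall k, (k <= m)%N -> condA br rho b alpha gamma k /\ condB br b alpha k) ->
  forall L : V, (forall Y, Y \in lbar -> br L Y = 0) ->
  forall X Y : V, alpha (br L X) Y = 0.
Proof.
move=> Hbr Hlcs0 Hdim2 Hcent Hdim3 Hbar Horth Hss Hq Hrho Hadm L HL X Y.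
have Hm : (1 <= m)%N.
  by case: m Hlcs0 Hadm => // H; move: Hdim2; rewrite /= H dimv0.
have [_ HB] := Hadm 1%N Hm.
have Hbr' := Hbr; case: Hbr' => [brl [brr [brxx _]]].
case: Horth => [_ [_ [_ [bl [bsym _]]]]].
case: Hq => [[al [ar axx]] [[gl [gm [gr [g1 [g2 g3]]]]] [Hd2 Hd3]]].
set l2 := lcs br 2.
have br0l y : br 0 y = 0 := lin0 (f := fun t => br t y) (fun c a b => brl c a b y).
have al0 y : alpha 0 y = 0 := lin0 (f := fun t => alpha t y) (fun c a b => al c a b y).
have alZ2 y c x : alpha y (c *: x) = c *: alpha y x := linZ (f := alpha y) (fun c a b => ar c a b y) c x.
have alD1 z x y : alpha (x + y) z = alpha x z + alpha y z := linD (f := fun t => alpha t z) (fun c a b => al c a b z) x y.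
have alD2 z x y : alpha z (x + y) = alpha z x + alpha z y := linD (f := alpha z) (fun c a b => ar c a b z) x y.
have aN x y : alpha y x = - alpha x y.
  have := axx (x + y); rewrite alD1 !alD2 !axx add0r addr0 => /eqP.
  by rewrite addr_eq0 => /eqP ->; rewrite opprK.
have aN2 x y : alpha x (- y) = - alpha x y.
  by rewrite -scaleN1r alZ2 scaleN1r.
have g0 y z : gamma 0 y z = 0 := slin0 (f := fun t => gamma t y z) (fun c a b => gl c a b y z).
have g03 y z : gamma y z 0 = 0 := slin0 (f := fun t => gamma y z t) (fun c a b => gr c a b y z).
have gZ1 y z c x : gamma (c *: x) y z = c * gamma x y z := slinZ (f := fun t => gamma t y z) (fun c a b => gl c a b y z) c x.
have gZ2 y z c x : gamma y (c *: x) z = c * gamma y x z := slinZ (f := fun t => gamma y t z) (fun c a b => gm c a b y z) c x.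
have b0 y : b 0 y = 0 := slin0 (f := fun t => b t y) (fun c a b' => bl c a b' y).
have bl2 u c v w : b u (c *: v + w) = c * b u v + b u w.
  by rewrite bsym bl !(bsym u).
have b02 y : b y 0 = 0 := slin0 (f := b y) (fun c a b' => bl2 y c a b').
have bD2 y u v : b y (u + v) = b y u + b y v := slinD (f := b y) (fun c a b' => bl2 y c a b') u v.
have bN2 y u : b y (- u) = - b y u := slinN (f := b y) (fun c a b' => bl2 y c a b') u.
have F1 x y : br x y \in l2 by apply: mem_bspace => //; apply: memvf.
have F2 z : z \in l2 -> forall y, br z y = 0 /\ br y z = 0.
  move=> Hz y; split; first exact: Hcent.
  have brD1 z' x y' : br (x + y') z' = br x z' + br y' z' := linD (f := fun t => br t z') (fun c a b => brl c a b z') x y'.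
  have brD2 z' x y' : br z' (x + y') = br z' x + br z' y' := linD (f := br z') (fun c a b => brr c a b z') x y'.
  have := brxx (z + y); rewrite brD1 !brD2 !brxx add0r addr0 (Hcent z Hz) add0r.
  done.
have D x1 x2 x3 : alpha (br x1 x2) x3 = alpha (br x1 x3) x2 - alpha (br x2 x3) x1.
  move: (Hd2 x1 x2 x3); rewrite /d2 !Hrho subr0 addr0 sub0r => /eqP.
  by rewrite -addrA addrC subr_eq0 => /eqP ->.
have l2ind (P : V -> Prop) : P 0 -> (forall (c : R) x y, P x -> P y -> P (c *: x + y)) ->
    (forall u w, u \in lbar -> w \in lbar -> P (br u w)) -> forall v, v \in l2 -> P v.
  move=> P0 Pl Pb v; rewrite /l2 -Hbar; apply: (span_ind P0 Pl) => i Hi.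
  have /allpairsP[[u w] [/vbasis_mem Hu /vbasis_mem Hw ->]] := mem_nth 0 Hi.
  exact: Pb.
have F4 v : v \in l2 -> alpha v L = 0.
  move: v; apply: (l2ind (fun v => alpha v L = 0)) => [|c x y Px Py|u w Hu Hw]; first exact: al0.
    by rewrite al Px Py scaler0 addr0.
  by move: (D L u w); rewrite !HL // !al0 sub0r => /eqP; rewrite eq_sym oppr_eq0 => /eqP.
have F5 k Y' : k \in lbar -> alpha (br L Y') k = 0.
  by move=> Hk; rewrite D HL // al0 F4 ?subr0.
have F6 z a c : z \in l2 -> alpha (br a c) z = 0.
  by move=> Hz; rewrite D !(proj2 (F2 z Hz _)) !al0 subr0.
have F8 p q r : p \in l2 -> q \in l2 -> r \in l2 -> gamma p q r = 0.
  move=> Hp Hq Hr.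
  have : ~~ free [:: p; q; r].
    rewrite /free /=; apply/negP => /eqP H3.
    have : (\dim <<[:: p; q; r]>> <= \dim l2)%N.
      apply: dimvS; apply/span_subvP => x; rewrite !inE => /or3P [] /eqP ->; done.
    by rewrite H3 Hdim2.
  rewrite free_cons => /nandP [/negbNE Hp' | ].
    rewrite span_cons span_seq1 in Hp'.
    move/memv_addP: Hp' => [u /vlineP [a ->] [v /vlineP [c ->] ->]].
    by rewrite gl gZ1 g1 g3 !mulr0 addr0.
  rewrite free_cons => /nandP [/negbNE Hq' | ].
    rewrite span_seq1 in Hq'; move/vlineP: Hq' => [c ->].
    by rewrite gZ2 g2 mulr0.
  rewrite free_cons span_nil memv0 nil_free andbT negbK => /eqP ->.
  exact: g03.
set Z := br L X.
have G k z : k \in lbar -> z \in l2 -> b (alpha Z Y) (alpha z k) = 0.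
  move=> Hk Hz.
  have HZ : Z \in l2 by apply: F1.
  move: (Hd3 Z z Y k); rewrite /d3 /half_wedge.
  rewrite (proj1 (F2 Z HZ _)) (proj1 (F2 Z HZ _)) (proj1 (F2 Z HZ _)).
  rewrite (proj1 (F2 z Hz _)) (proj1 (F2 z Hz _)) !g0 (F8 _ _ _ (F1 Y k) HZ Hz).
  by rewrite /Z F6 // (F5 k X Hk) !b0 !oppr0 !addr0 ?subr0 ?add0r => /eqP; rewrite eq_sym oppr_eq0 => /eqP.
have H z : z \in l2 -> forall X', b (alpha Z Y) (alpha z X') = 0.
  move: z; apply: (l2ind (fun z => forall X', b (alpha Z Y) (alpha z X') = 0)).
  - by move=> X'; rewrite al0 b02.
  - by move=> c x y Px Py X'; rewrite al bl2 Px Py mulr0 addr0.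
  - move=> u w Hu Hw X'; rewrite D.
    by rewrite bD2 bN2 (G w (br u X') Hw (F1 _ _)) (G u (br w X') Hu (F1 _ _)) oppr0 addr0.
apply: HB.
- exists [:: (Y, - Z)]; split.
    by move=> p; rewrite inE => /eqP -> /=; rewrite rpredN; apply: F1.
  split; first by rewrite big_seq1 /= (proj2 (F2 (- Z) _ Y)) // rpredN F1.
  by rewrite big_seq1 /= aN2 -aN.
- move=> c [s [Hs [_ ->]]].
  rewrite big_seq; apply: (big_ind (fun v => b (alpha Z Y) v = 0)).
  + exact: b02.
  + by move=> x y Px Py; rewrite bD2 Px Py addr0.
  + by move=> p Hp; rewrite (aN p.2 p.1) bN2 H ?oppr0 //; apply: Hs.
Qed.
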